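(* For every planar forest $F$, $\Delta(F)=\sum_{c\in \mathrm{Adm}^l(F)}P^c(F)\otimes R^c(F)+F\otimes 1+1\otimes F$.
   Context: Planar rooted trees have their children linearly ordered left to right; a planar forest is a finite, possibly empty, sequence of planar rooted trees ($1$ = empty forest); $\mathcal{H}$ is the free associative unital algebra over a field $K$ on planar rooted trees, with basis the planar forests and product concatenation. $B^+(F)$ is the tree obtained by grafting the trees of the forest $F$ (in order) on a new common root; $\varepsilon(F)=\delta_{F,1}$. $\Delta:\mathcal{H}\to\mathcal{H}\otimes\mathcal{H}$ is the unique linear map with $\Delta(1)=1\otimes1$, $\Delta(xy)=(x\otimes1)\Delta(y)+\Delta(x)(1\otimes y)-x\otimes y$ and $\Delta(B^+(x))=B^+(x)\otimes 1+(\mathrm{Id}\otimes B^+)\Delta(x)$ for all $x,y\in\mathcal{H}$. Orders on the vertices of a nonempty forest $F=t_1\cdots t_n$: $s\geq_{high}s'$ iff $s'=s$ or $s'$ is an ancestor of $s$. If $s,s'$ are incomparable for $\geq_{high}$, then $s\geq_{left}s'$ iff either $s\in t_i$, $s'\in t_j$ with $i<j$, or $s,s'$ lie in the same $t_i$ and $s\geq_{left}s'$ in the forest obtained from $t_i$ by deleting its root (recursive definition). $s\geq_{h,l}s'$ iff $s\geq_{high}s'$ or $s\geq_{left}s'$; this is a total order. Admissible cuts: add to each tree of $F$ an imaginary edge below its root. An admissible cut $c$ is a nonempty set of edges (real edges or imaginary root-edges) such that every path from the base of a tree to a leaf contains at most one edge of $c$, and which is not the total cut (consisting of all root-edges). $P^c(F)$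 is the planar forest formed by the vertices lying above an edge of $c$ (i.e. whose path to the base contains an edge of $c$), and $R^c(F)$ the planar forest formed by the remaining vertices, with induced edges and left-right orders. Writing the vertices of $F$ as $s_1\geq_{h,l}\cdots\geq_{h,l}s_n$, an admissible cut $c$ is left-admissible if there is $k$ such that the vertices of $P^c(F)$ are exactly $s_1,\dots,s_k$; $\mathrm{Adm}^l(F)$ is the set of left-admissible cuts. *)

(* Defs.v *)
From HB Require Import structures.
From mathcomp Require Import all_boot all_algebra.
Set Implicit Arguments. Unset Strict Implicit. Unset Printing Implicit Defensive.
Import GRing.Theory.

Inductive tree : Type := Node of seq tree.
Definition forest := seq tree.
Definition Bplus (F : forest) : tree := Node F.

Fixpoint tree_enc (t : tree) : GenTree.tree unit :=
  let: Node ts := t in GenTree.Node 0 (map tree_enc ts).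
Fixpoint tree_dec (g : GenTree.tree unit) : tree :=
  match g with
  | GenTree.Leaf _ => Node [::]
  | GenTree.Node _ gs => Node (map tree_dec gs)
  end.
Lemma tree_encK_aux : forall t, tree_dec (tree_enc t) = t.
Proof.
fix IH 1; case=> ts /=; congr Node.
elim: ts => [|t ts IHts] //=; by rewrite IH IHts.
Qed.
Lemma tree_encK : cancel tree_enc tree_dec.
Proof. exact: tree_encK_aux. Qed.
HB.instance Definition _ := Countable.copy tree (can_type tree_encK).

(* The vertex with path [:: i] is the root of the i-th tree; [:: i & p] is the
   vertex with path p in the forest obtained from the i-th tree by deleting its
   root.  An edge (real or imaginary root edge) is identified with the vertex
   just above it. *)
Fixpoint tverts (t : tree) : seq (seq nat) :=
  let: Node ts := t in
  [::] :: (fix fv (ts : seq tree) (i : nat) : seq (seq nat) :=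
             match ts with
             | [::] => [::]
             | t' :: ts' => map (cons i) (tverts t') ++ fv ts' i.+1
             end) ts 0.
Fixpoint fverts_from (F : forest) (i : nat) : seq (seq nat) :=
  match F with
  | [::] => [::]
  | t :: F' => map (cons i) (tverts t) ++ fverts_from F' i.+1
  end.
Definition fverts (F : forest) := fverts_from F 0.
Definition nv (F : forest) := size (fverts F).
Definition vtx (F : forest) (i : 'I_(nv F)) : seq nat := nth [::] (fverts F) i.

(* A cut is a set of edges, i.e. a set of (indices of) vertices. *)
Definition cutp (F : forest) (c : {set 'I_(nv F)}) : pred (seq nat) :=
  fun p => [exists i in c, vtx i == p].

(* R^c : remove the vertices lying above an edge of c *)
Fixpoint tR (cp : pred (seq nat)) (p : seq nat) (t : tree) : tree :=
  let: Node ts := t in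
  Node ((fix fR (ts : seq tree) (i : nat) : forest :=
          match ts with
          | [::] => [::]
          | t' :: ts' => (if cp (rcons p i) then [::]
                          else [:: tR cp (rcons p i) t']) ++ fR ts' i.+1
          end) ts 0).
Fixpoint fR_from (cp : pred (seq nat)) (F : forest) (i : nat) : forest :=
  match F with
  | [::] => [::]
  | t :: F' => (if cp [:: i] then [::] else [:: tR cp [:: i] t]) ++ fR_from cp F' i.+1
  end.
(* P^c : the subtrees above the edges of c, in left-to-right order *)
Fixpoint tP (cp : pred (seq nat)) (p : seq nat) (t : tree) : forest :=
  let: Node ts := t in
  (fix fP (ts : seq tree) (i : nat) : forest :=
     match ts with
     | [::] => [::]
     | t' :: ts' => (if cp (rcons p i) then [:: t'] else tP cp (rcons p i) t')
                    ++ fP ts' i.+1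
     end) ts 0.
Fixpoint fP_from (cp : pred (seq nat)) (F : forest) (i : nat) : forest :=
  match F with
  | [::] => [::]
  | t :: F' => (if cp [:: i] then [:: t] else tP cp [:: i] t) ++ fP_from cp F' i.+1
  end.

Definition Rcut (F : forest) (c : {set 'I_(nv F)}) : forest := fR_from (cutp c) F 0.
Definition Pcut (F : forest) (c : {set 'I_(nv F)}) : forest := fP_from (cutp c) F 0.

Definition admissible (F : forest) (c : {set 'I_(nv F)}) : bool :=
  [&& c != set0,
      [forall i in c, forall j in c, (i != j) ==> ~~ prefix (vtx i) (vtx j)]
    & ~~ [forall i, (i \in c) == (size (vtx i) == 1)]].

Definition Pvert (F : forest) (c : {set 'I_(nv F)}) (v : seq nat) : bool :=
  [exists i in c, prefix (vtx i) v].

Definition ge_high (s s' : seq nat) : bool := prefix s' s.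
Fixpoint ge_left (s s' : seq nat) : bool :=
  match s, s' with
  | i :: s1, j :: s1' => (i < j) || ((i == j) && ge_left s1 s1')
  | _, _ => false
  end.
Definition ge_hl (s s' : seq nat) : bool :=
  ge_high s s' || [&& ~~ ge_high s s', ~~ ge_high s' s & ge_left s s'].
Definition sorted_verts (F : forest) : seq (seq nat) := sort ge_hl (fverts F).

Definition left_admissible (F : forest) (c : {set 'I_(nv F)}) : bool :=
  admissible c &&
  [exists k : 'I_(nv F).+1,
     all (fun v => Pvert c v == (v \in take k (sorted_verts F))) (fverts F)].

(* ---------- Tensors H (x) H as coefficient functions on pairs of forests ---- *)
Section Tens.
Variable K : fieldType.
Definition tens := forest -> forest -> K.
Local Open Scope ring_scope.
Definition tsimple (F G : forest) : tens := fun A B => ((A == F) && (B == G))%:R.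
(* (F (x) 1) t *)
Definition tlmul (F : forest) (t : tens) : tens :=
  fun A B => if take (size F) A == F then t (drop (size F) A) B else 0.
(* t (1 (x) G) *)
Definition trmul (t : tens) (G : forest) : tens :=
  fun A B => if (size G <= size B)%N && (drop (size B - size G) B == G)
             then t A (take (size B - size G) B) else 0.
(* (Id (x) B^+) t *)
Definition tidB (t : tens) : tens :=
  fun A B => if B is [:: Node S0] then t A S0 else 0.

Definition is_Delta (D : forest -> tens) : Prop :=
  [/\ D [::] = tsimple [::] [::],
      forall x y : forest, forall A B,
        D (x ++ y) A B = tlmul x (D y) A B + trmul (D x) y A B - tsimple x y A B
    & forall x : forest, forall A B,
        D [:: Bplus x] A B = tsimple [:: Bplus x] [::] A B + tidB (D x) A B].
End Tens.

(* Main.v *)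
Require Import Defs.
From HB Require Import structures.
From mathcomp Require Import all_boot all_algebra.
From mathcomp Require Import zify.

Fixpoint tsz (t : tree) : nat := let: Node ts := t in (sumn (map tsz ts)).+1.
Definition fsz F := sumn (map tsz F).

Lemma fsz_cons ts G : fsz (Node ts :: G) = (fsz ts).+1 + fsz G.
Proof. by []. Qed.

Lemma forest_ind' (P : forest -> Prop) : P [::] ->
  (forall ts G, P ts -> P G -> P (Node ts :: G)) -> forall F, P F.
Proof.
move=> H0 Hc F; have [n] := ubnP (fsz F); elim: n F => // n IH [|[ts] G] // Hlt.
rewrite fsz_cons in Hlt; apply: Hc; apply: IH; lia.
Qed.

Lemma tverts_Node ts : tverts (Node ts) = [::] :: fverts_from ts 0.
Proof. rewrite /=; congr cons; by elim: ts 0 => //= t ts IH i; rewrite IH. Qed.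

Lemma fverts_cons ts G i : fverts_from (Node ts :: G) i =
  (i :: [::]) :: map (cons i) (fverts_from ts 0) ++ fverts_from G i.+1.
Proof. have -> : fverts_from (Node ts :: G) i = map (cons i) (tverts (Node ts)) ++ fverts_from G i.+1 by []. by rewrite tverts_Node. Qed.

Lemma fverts_head F : forall i v, v \in fverts_from F i -> exists j w, v = j :: w /\ i <= j.
Proof.
elim/forest_ind': F => [//|ts G _ IHG] i v.
rewrite fverts_cons inE mem_cat => /orP[/eqP->|/orP[/mapP[w _ ->]|/IHG[j [w [-> le]]]]].
- by exists i, [::].
- by exists i, w.
- by exists j, w; split => //; lia.
Qed.

Lemma fverts_root F : forall i v, v \in fverts_from F i -> [:: head 0 v] \in fverts_from F i.
Proof.
elim/forest_ind': F => [//|ts G _ IHG] i v.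
rewrite !fverts_cons !inE !mem_cat => /orP[/eqP->|/orP[/mapP[w _ ->]|/IHG ->]].
- by rewrite eqxx.
- by rewrite eqxx.
- by rewrite !orbT.
Qed.

Lemma size_fverts F : forall i, size (fverts_from F i) = fsz F.
Proof.
elim/forest_ind': F => [//|ts G IHts IHG] i.
by rewrite fverts_cons /= size_cat size_map IHts IHG fsz_cons.
Qed.

Lemma uniq_fverts F : forall i, uniq (fverts_from F i).
Proof.
elim/forest_ind': F => [//|ts G IHts IHG] i.
rewrite fverts_cons cons_uniq mem_cat negb_or cat_uniq IHG andbT.
rewrite map_inj_uniq ?IHts; last by move=> x y [].
apply/and3P; split => //.
- apply/andP; split.
  + by apply/mapP => -[w /fverts_head [j [w' [-> _]]]].
  + by apply/negP => /fverts_head [j [w [[e _] le]]]; lia.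
- apply/hasP => -[v /fverts_head [j [w [-> le]]]] /mapP [u _ [e _]]; lia.
Qed.

Fixpoint geh (s s' : seq nat) : bool :=
  match s, s' with
  | _, [::] => true
  | [::], _ :: _ => false
  | i :: s1, j :: s1' => (i < j) || ((i == j) && geh s1 s1')
  end.

Lemma ge_hlE s s' : ge_hl s s' = geh s s'.
Proof.
elim: s s' => [|i s IH] [|j s'] //=.
rewrite /ge_hl /ge_high !prefix_cons /= -IH /ge_hl /ge_high.
rewrite [j == i]eq_sym; case: (ltngtP i j) => //= _; by case: (prefix s' s); case: (prefix s s').
Qed.

Lemma geh_total s s' : geh s s' || geh s' s.
Proof.
elim: s s' => [|i s IH] [|j s'] //=.
rewrite [j == i]eq_sym; case: ltngtP => //= _; exact: IH.
Qed.

Lemma geh_anti s s' : geh s s' -> geh s' s -> s = s'.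
Proof.
elim: s s' => [|i s IH] [|j s'] //=.
rewrite [j == i]eq_sym; case: ltngtP => //= e H1 H2; by rewrite e (IH _ H1 H2).
Qed.

Lemma geh_trans : transitive geh.
Proof.
move=> y x z; elim: x y z => [|i x IH] [|j y] [|k z] //=.
move=> /orP[lt|/andP[/eqP e1 H1]] /orP[lt2|/andP[/eqP e2 H2]]; subst.
- by rewrite (ltn_trans lt lt2).
- by rewrite lt.
- by rewrite lt2.
- by rewrite ltnn eqxx (IH _ _ H1 H2) orbT.
Qed.

Lemma geh_pre s s' : prefix s' s -> geh s s'.
Proof.
elim: s s' => [|i s IH] [|j s'] //; rewrite prefix_cons => /andP[/eqP-> /IH] /= ->.
by rewrite eqxx orbT.
Qed.

Lemma geh_cons i s s' : geh (i :: s) (i :: s') = geh s s'.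
Proof. by rewrite /= ltnn eqxx. Qed.

Lemma geh_lt i j s s' : i < j -> geh (i :: s) (j :: s').
Proof. by move=> /= ->. Qed.

Lemma prefix_anti (a b : seq nat) : prefix a b -> size b <= size a -> a = b.
Proof. by rewrite prefixE => /eqP e le; rewrite -e take_oversize. Qed.

Lemma prefix_size (a b : seq nat) : prefix a b -> size a <= size b.
Proof. by move=> /prefixP[c ->]; rewrite size_cat leq_addr. Qed.

Lemma prefix_rconsE (s q : seq nat) x : prefix s (rcons q x) = (s == rcons q x) || prefix s q.
Proof.
elim: q s => [|y q IH] [|z s] //=.
- by case: s => [|w s] /=; rewrite ?orbF ?eqseq_cons ?andbT ?andbF.
- by rewrite IH eqseq_cons andb_orr.
Qed.

Fixpoint fPg (cp : pred (seq nat)) (p : seq nat) (F : forest) (i : nat) : forest :=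
  match F with
  | [::] => [::]
  | t :: F' => (if cp (rcons p i) then [:: t] else tP cp (rcons p i) t) ++ fPg cp p F' i.+1
  end.
Fixpoint fRg (cp : pred (seq nat)) (p : seq nat) (F : forest) (i : nat) : forest :=
  match F with
  | [::] => [::]
  | t :: F' => (if cp (rcons p i) then [::] else [:: tR cp (rcons p i) t]) ++ fRg cp p F' i.+1
  end.

Lemma fPg_cons cp p t F i : fPg cp p (t :: F) i =
  (if cp (rcons p i) then [:: t] else tP cp (rcons p i) t) ++ fPg cp p F i.+1.
Proof. by []. Qed.
Lemma fRg_cons cp p t F i : fRg cp p (t :: F) i =
  (if cp (rcons p i) then [::] else [:: tR cp (rcons p i) t]) ++ fRg cp p F i.+1.
Proof. by []. Qed.

Lemma tP_Node cp p ts : tP cp p (Node ts) = fPg cp p ts 0.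
Proof. rewrite /=; by elim: ts 0 => //= t ts IH i; rewrite IH. Qed.
Lemma tR_Node cp p ts : tR cp p (Node ts) = Node (fRg cp p ts 0).
Proof. rewrite /=; congr Node; by elim: ts 0 => //= t ts IH i; rewrite IH. Qed.
Lemma fP_fromE cp F i : fP_from cp F i = fPg cp [::] F i.
Proof. by elim: F i => //= t F IH i; rewrite IH. Qed.
Lemma fR_fromE cp F i : fR_from cp F i = fRg cp [::] F i.
Proof. by elim: F i => //= t F IH i; rewrite IH. Qed.

Fixpoint tsplit (t : tree) (k : nat) : forest * forest :=
 let: Node ts := t in
 let s := (fix fs (F : forest) (k : nat) := match F with [::] => ([::],[::]) | t' :: G => if k < tsz t' then ((tsplit t' k).1, (tsplit t' k).2 ++ G) else let s := fs G (k - tsz t') in (t' :: s.1, s.2) end) ts k in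
 if k < (fsz ts).+1 then (s.1, [:: Node s.2]) else ([:: Node ts], [::]).
Fixpoint fsplit (F : forest) (k : nat) : forest * forest :=
  match F with
  | [::] => ([::],[::])
  | t' :: G => if k < tsz t' then ((tsplit t' k).1, (tsplit t' k).2 ++ G)
               else let s := fsplit G (k - tsz t') in (t' :: s.1, s.2)
  end.
Lemma tsplitE ts k : tsplit (Node ts) k = if k < (fsz ts).+1 then ((fsplit ts k).1, [:: Node (fsplit ts k).2]) else ([:: Node ts], [::]).
Proof. rewrite /=. by elim: ts k => //. Qed.

Lemma fsplit_cons ts G k : fsplit (Node ts :: G) k =
  if k < (fsz ts).+1 then ((fsplit ts k).1, Node (fsplit ts k).2 :: G)
  else (Node ts :: (fsplit G (k - (fsz ts).+1)).1, (fsplit G (k - (fsz ts).+1)).2).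
Proof.
have -> : fsplit (Node ts :: G) k = if k < (fsz ts).+1 then ((tsplit (Node ts) k).1, (tsplit (Node ts) k).2 ++ G)
               else let s := fsplit G (k - (fsz ts).+1) in (Node ts :: s.1, s.2) by [].
by rewrite tsplitE; case: ifP => //= ->.
Qed.

Lemma fsplit_0 F : fsplit F 0 = ([::], F).
Proof. elim/forest_ind': F => // ts G IHts _; by rewrite fsplit_cons /= IHts. Qed.

Lemma fsplit_all F : fsplit F (fsz F) = (F, [::]).
Proof.
elim/forest_ind': F => // ts G _ IHG; rewrite fsplit_cons fsz_cons.
by rewrite ltnNge leq_addr /= addKn IHG.
Qed.

Lemma fPg_inv cp U (H : forall q j, ~~ U q -> U (rcons q j) = cp (rcons q j)) F :
  forall p i, ~~ U p -> fPg cp p F i = fPg U p F i /\ fRg cp p F i = fRg U p F i.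
Proof.
elim/forest_ind': F => // ts G IHts IHG p i Hp; rewrite !fPg_cons !fRg_cons.
rewrite -(H _ _ Hp) !tP_Node !tR_Node; have [IG1 IG2] := IHG p i.+1 Hp.
case E: (U (rcons p i)); first by rewrite IG1 IG2.
have [I1 I2] := IHts (rcons p i) 0 (negbT E).
by rewrite IG1 IG2 I1 I2.
Qed.

Lemma split_ok (U : pred (seq nat)) F : forall p i,
  (forall v w, v \in fverts_from F i -> w \in fverts_from F i -> geh w v -> U (p ++ v) -> U (p ++ w)) ->
  fPg U p F i = (fsplit F (count (fun v => U (p ++ v)) (fverts_from F i))).1 /\
  fRg U p F i = (fsplit F (count (fun v => U (p ++ v)) (fverts_from F i))).2.
Proof.
elim/forest_ind': F => // ts G IHts IHG p i Hup.
have memr : [:: i] \in fverts_from (Node ts :: G) i by rewrite fverts_cons mem_head.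
have memt w : w \in fverts_from ts 0 -> (i :: w) \in fverts_from (Node ts :: G) i.
  by move=> hw; rewrite fverts_cons inE mem_cat map_f ?orbT.
have memg v : v \in fverts_from G i.+1 -> v \in fverts_from (Node ts :: G) i.
  by move=> hv; rewrite fverts_cons inE mem_cat hv !orbT.
have HupG : forall v w, v \in fverts_from G i.+1 -> w \in fverts_from G i.+1 ->
    geh w v -> U (p ++ v) -> U (p ++ w).
  by move=> v w hv hw; apply: Hup; apply: memg.
have [IG1 IG2] := IHG p i.+1 HupG.
have cc : forall (a : pred (seq nat)) x s, count a (x :: s) = a x + count a s by [].
rewrite fverts_cons cc count_cat count_map.
rewrite (eq_count (a2 := fun w => U (rcons p i ++ w))); last by move=> w /=; rewrite cat_rcons.
rewrite cats1 fPg_cons fRg_cons tP_Node tR_Node.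
set cts := count _ (fverts_from ts 0); set cG := count _ (fverts_from G i.+1).
case Ur: (U (rcons p i)).
- have -> : cts = fsz ts.
    rewrite /cts -(size_fverts ts 0) -count_predT; apply: eq_in_count => w hw.
    rewrite /= cat_rcons; apply: (Hup [:: i]) => //; [exact: memt| |by rewrite cats1].
    by apply: geh_pre; rewrite prefix_cons eqxx prefix0s.
  rewrite fsplit_cons ltnNge add1n leq_addr /= subSS addKn.
  by rewrite IG1 IG2.
- have cG0 : cG = 0.
    rewrite /cG; apply/eqP; rewrite eqn0Ngt -has_count; apply/hasP => -[v hv Uv].
    move: (hv) => /fverts_head [j [w [ev le]]].
    have := Hup v [:: i] (memg _ hv) memr; rewrite cats1 Ur => H; suff: false by []; apply: H => //.
    by rewrite ev; apply: geh_lt.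
  have ctsle : cts < (fsz ts).+1.
    by rewrite ltnS /cts -(size_fverts ts 0) count_size.
  have Hupt : forall v w, v \in fverts_from ts 0 -> w \in fverts_from ts 0 ->
    geh w v -> U (rcons p i ++ v) -> U (rcons p i ++ w).
    move=> v w hv hw hg; rewrite !cat_rcons; apply: Hup; rewrite ?memt //.
    by rewrite geh_cons.
  have [I1 I2] := IHts (rcons p i) 0 Hupt.
  rewrite (_ : false + (cts + cG) = cts + cG) // cG0 addn0 fsplit_cons ctsle I1 I2.
  move: IG1 IG2; rewrite -/cG cG0 fsplit_0 /= => -> ->.
  by rewrite cats0.
Qed.

Lemma ge_hl_total : total ge_hl.
Proof. by move=> x y; rewrite !ge_hlE geh_total. Qed.
Lemma ge_hl_trans : transitive ge_hl.
Proof. by move=> y x z; rewrite !ge_hlE; apply: geh_trans. Qed.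

Lemma Sv_perm F : perm_eq (sorted_verts F) (fverts F).
Proof. by rewrite /sorted_verts perm_sort. Qed.
Lemma Sv_uniq F : uniq (sorted_verts F).
Proof. by rewrite /sorted_verts sort_uniq uniq_fverts. Qed.
Lemma Sv_sorted F : sorted ge_hl (sorted_verts F).
Proof. exact: (sort_sorted ge_hl_total). Qed.
Lemma Sv_size F : size (sorted_verts F) = nv F.
Proof. by rewrite (perm_size (Sv_perm F)). Qed.
Lemma Sv_mem F v : (v \in sorted_verts F) = (v \in fverts F).
Proof. exact: (perm_mem (Sv_perm F)). Qed.

Lemma Uk_up F k v w : v \in take k (sorted_verts F) -> w \in fverts F -> geh w v ->
  w \in take k (sorted_verts F).
Proof.
move=> hv hw hg; set S := sorted_verts F.
have vS : v \in S by apply: mem_take hv.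
have wS : w \in S by rewrite Sv_mem.
move: hv; rewrite !in_take // => hv.
case: (ltnP (index w S) k) => // hk.
have lt : index v S < index w S by apply: (leq_trans hv hk).
have := sorted_ltn_nth ge_hl_trans [::] (Sv_sorted F).
move=> /(_ (index v S) (index w S)); rewrite !inE !index_mem => /(_ vS wS lt).
rewrite !nth_index // ge_hlE => hg2.
have evw := geh_anti _ _ hg2 hg; by rewrite evw ltnn in lt.
Qed.

Lemma count_Uk F k : k <= nv F ->
  count (fun v => v \in take k (sorted_verts F)) (fverts F) = k.
Proof.
move=> hk; rewrite -(permP (Sv_perm F)).
set S := sorted_verts F.
have := Sv_uniq F; rewrite -/S -{1 3}(cat_take_drop k S) cat_uniq => /and3P[_ hd _].
rewrite count_cat.
have -> : count (fun v => v \in take k S) (drop k S) = 0.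
  by apply/eqP; rewrite eqn0Ngt -has_count.
rewrite addn0 (eq_in_count (a2 := predT)); last by [].
rewrite count_predT size_take Sv_size; case: ltnP => // h.
by apply/eqP; rewrite eqn_leq hk h.
Qed.

Lemma vtx_mem F (i : 'I_(nv F)) : vtx i \in fverts F.
Proof. by rewrite /vtx mem_nth. Qed.
Lemma vtx_inj F : injective (@vtx F).
Proof.
move=> i j /eqP; rewrite /vtx nth_uniq ?uniq_fverts; first by move/eqP/val_inj.
- exact: (ltn_ord i).
- exact: (ltn_ord j).
- by [].
Qed.
Lemma vtx_onto F v : v \in fverts F -> exists i : 'I_(nv F), vtx i = v.
Proof.
move=> hv; have hi : index v (fverts F) < nv F by rewrite index_mem.
by exists (Ordinal hi); rewrite /vtx nth_index.
Qed.
Lemma vtx_cons F (i : 'I_(nv F)) : exists j w, vtx i = j :: w.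
Proof. by have [j [w [e _]]] := fverts_head _ _ _ (vtx_mem _ i); exists j, w. Qed.

Lemma Pvert_nil F (c : {set 'I_(nv F)}) : ~~ Pvert c [::].
Proof.
apply/existsP => -[i /andP[_]]; rewrite prefixs0.
by have [j [w ->]] := vtx_cons _ i.
Qed.

Lemma PvertH F (c : {set 'I_(nv F)}) q j : ~~ Pvert c q -> Pvert c (rcons q j) = cutp c (rcons q j).
Proof.
move=> hq; rewrite /Pvert /cutp; apply/existsP/existsP => -[i /andP[ic h]]; exists i; rewrite ic /=.
- move: h; rewrite prefix_rconsE => /orP[//|h]; case/negP: hq.
  by apply/existsP; exists i; rewrite ic.
- by rewrite (eqP h) prefix_refl.
Qed.

Lemma Pcut_split F (c : {set 'I_(nv F)}) :
  (forall v w, v \in fverts F -> w \in fverts F -> geh w v -> Pvert c v -> Pvert c w) ->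
  Pcut c = (fsplit F (count (Pvert c) (fverts F))).1 /\
  Rcut c = (fsplit F (count (Pvert c) (fverts F))).2.
Proof.
move=> hup; rewrite /Pcut /Rcut fP_fromE fR_fromE.
have [e1 e2] := fPg_inv (cutp c) (Pvert c) (@PvertH F c) F [::] 0 (Pvert_nil F c).
rewrite e1 e2; exact: (split_ok (Pvert c) F [::] 0 hup).
Qed.

Definition achain {F} (c : {set 'I_(nv F)}) :=
  [forall i in c, forall j in c, (i != j) ==> ~~ prefix (vtx i) (vtx j)].

Definition ck F k : {set 'I_(nv F)} :=
  [set i | (vtx i \in take k (sorted_verts F)) &&
           [forall j, (prefix (vtx j) (vtx i) && (j != i)) ==> (vtx j \notin take k (sorted_verts F))]].

Lemma Pvert_ck F k v : v \in fverts F -> Pvert (ck F k) v = (v \in take k (sorted_verts F)).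
Proof.
move=> hv; apply/existsP/idP.
- move=> [i /andP[]]; rewrite inE => /andP[hi _] hp.
  by apply: (Uk_up F k (vtx i) v hi hv); apply: geh_pre.
- move=> hk; have [i0 ei0] := vtx_onto F v hv.
  pose P : pred 'I_(nv F) := fun j => prefix (vtx j) v && (vtx j \in take k (sorted_verts F)).
  have P0 : P i0 by rewrite /P ei0 prefix_refl hk.
  case: (@arg_minnP _ i0 P (fun j => size (vtx j)) P0) => m /andP[pm km] hmin.
  exists m; rewrite pm andbT inE km /=.
  apply/forallP => j; apply/implyP => /andP[pj nj]; apply/negP => kj.
  have Pj : P j by rewrite /P kj (prefix_trans pj pm).
  have hs := hmin j Pj.
  have := prefix_anti _ _ pj hs => /vtx_inj ejm; by rewrite ejm eqxx in nj.
Qed.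

Lemma ck_achain F k : achain (ck F k).
Proof.
apply/forall_inP => i ic; apply/forall_inP => j jc; apply/implyP => nij; apply/negP => pij.
move: ic jc; rewrite !inE => /andP[ki _] /andP[_ /forallP/(_ i)]; rewrite pij nij /=.
by rewrite ki.
Qed.

Lemma cut_sub F (c c' : {set 'I_(nv F)}) : achain c ->
  (forall v, v \in fverts F -> Pvert c v = Pvert c' v) -> c \subset c'.
Proof.
move=> ac E; apply/subsetP => i ic.
have : Pvert c' (vtx i) by rewrite -E ?vtx_mem //; apply/existsP; exists i; rewrite ic prefix_refl.
move=> /existsP[j /andP[jc' pji]].
have : Pvert c (vtx j) by rewrite E ?vtx_mem //; apply/existsP; exists j; rewrite jc' prefix_refl.
move=> /existsP[l /andP[lc plj]].
have pli := prefix_trans plj pji.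
have eli : l = i.
  apply/eqP; apply: contraT => nli.
  by move: ac => /forall_inP/(_ l lc)/forall_inP/(_ i ic); rewrite nli pli.
subst l.
have eji := prefix_anti _ _ pji (prefix_size _ _ plj).
by rewrite -(vtx_inj F _ _ eji).
Qed.

Lemma cut_unique F (c c' : {set 'I_(nv F)}) : achain c -> achain c' ->
  (forall v, v \in fverts F -> Pvert c v = Pvert c' v) -> c = c'.
Proof.
move=> ac ac' E; apply/eqP; rewrite eqEsubset (cut_sub _ _ _ ac E) (cut_sub _ _ _ ac') //.
by move=> v hv; rewrite E.
Qed.

Lemma count_ck F k : k <= nv F -> count (Pvert (ck F k)) (fverts F) = k.
Proof.
move=> hk; rewrite -{2}(count_Uk F k hk); apply: eq_in_count => v hv.
exact: Pvert_ck.
Qed.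

Lemma ck_split F k : k <= nv F ->
  Pcut (ck F k) = (fsplit F k).1 /\ Rcut (ck F k) = (fsplit F k).2.
Proof.
move=> hk; rewrite -{2 4}(count_ck F k hk); apply: Pcut_split.
move=> v w hv hw hg; rewrite !Pvert_ck //; move=> hv'; exact: (Uk_up F k v w hv' hw hg).
Qed.

Lemma LA_ck F k : 0 < k < nv F -> left_admissible (ck F k).
Proof.
case/andP=> k0 kn; apply/andP; split; last first.
  have kn' : k < (nv F).+1 by apply: ltnW.
  apply/existsP; exists (Ordinal kn'); apply/allP => v hv /=.
  by rewrite Pvert_ck.
apply/and3P; split; last first.
- apply/negP => /forallP H.
  have : has (fun v => v \notin take k (sorted_verts F)) (fverts F).
    rewrite has_count.
    have := count_predC (fun v => v \in take k (sorted_verts F)) (fverts F).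
    rewrite count_Uk ?(ltnW kn) // => e.
    have : nv F = k + count (predC (fun v => v \in take k (sorted_verts F))) (fverts F) by rewrite e.
    move=> e2; rewrite (eq_count (a2 := predC (fun v => v \in take k (sorted_verts F)))) //.
    by move: kn; rewrite e2 -{1}(addn0 k) ltn_add2l.
  move=> /hasP[v hv nk].
  have [j [w [ev _]]] := fverts_head _ _ _ hv.
  have hr := fverts_root _ _ _ hv; rewrite ev /= in hr.
  have [r er] := vtx_onto F _ hr.
  have rc : r \in ck F k by rewrite (eqP (H r)) er.
  have : Pvert (ck F k) v by apply/existsP; exists r; rewrite rc er ev prefix_cons eqxx prefix0s.
  by rewrite Pvert_ck // (negbTE nk).
- exact: ck_achain.
- have [v [hv hk]] : exists v, v \in fverts F /\ v \in take k (sorted_verts F).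
    case E: (sorted_verts F) => [|v0 S'].
      by move: (Sv_size F); rewrite E => /= h; rewrite -h in kn.
    exists v0; rewrite -Sv_mem E; case: k k0 kn => // k' _ _ /=; by rewrite !inE eqxx.
  move: hk; rewrite -Pvert_ck // => /existsP[i /andP[ic _]]; apply/set0Pn; by exists i.
Qed.

Lemma LA_inv F (c : {set 'I_(nv F)}) : left_admissible c -> exists2 k, 0 < k < nv F & c = ck F k.
Proof.
case/andP => /and3P[c0 ac ntot] /existsP[k /allP hk].
have E v : v \in fverts F -> Pvert c v = (v \in take k (sorted_verts F)) by move=> hv; exact: (eqP (hk v hv)).
have kle : k <= nv F by rewrite -ltnS.
exists k; last first.
  apply: cut_unique => //; first exact: ck_achain.
  by move=> v hv; rewrite E // Pvert_ck.
case/set0Pn: c0 => i ic.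
have Pi : Pvert c (vtx i) by apply/existsP; exists i; rewrite ic prefix_refl.
apply/andP; split.
  rewrite lt0n; apply/negP => /eqP k0.
  by move: Pi; rewrite E ?vtx_mem // k0 take0 in_nil.
rewrite ltn_neqAle kle andbT; apply/negP => /eqP kn.
case/negP: ntot; apply/forallP => i'.
have [j [w ew]] := vtx_cons F i'.
have hr : [:: j] \in fverts F by have := fverts_root _ _ _ (vtx_mem F i'); rewrite ew.
have : Pvert c [:: j].
  by rewrite E // kn take_oversize ?Sv_size // Sv_mem.
move=> /existsP[l /andP[lc plj]].
have elj : vtx l = [:: j].
  move: plj; rewrite prefixs1 => /orP[/eqP e|/eqP //].
  by have [a [b e']] := vtx_cons F l; rewrite e' in e.
apply/eqP; case i'c : (i' \in c).
- have eli : l = i'.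
    apply/eqP; apply: contraT => nli.
    move: ac => /forall_inP/(_ l lc)/forall_inP/(_ i' i'c); rewrite nli elj ew.
    by rewrite prefix_cons eqxx prefix0s.
  by subst l; rewrite elj.
- apply/esym/negbTE/eqP => s1.
  have ew' : vtx i' = [:: j] by move: s1; rewrite ew; case: w {ew} => // /=.
  have eil := vtx_inj F _ _ (etrans ew' (esym elj)); by rewrite -eil i'c in lc.
Qed.

Local Open Scope ring_scope.
Import GRing.Theory.

Definition Esum (K : fieldType) m n (p r : nat -> forest) : tens K :=
  fun A B => \sum_(m <= k < n) ((A == p k) && (B == r k))%:R.

Definition Ef (K : fieldType) (F : forest) : tens K :=
  Esum K 0 (fsz F).+1 (fun k => (fsplit F k).1) (fun k => (fsplit F k).2).

Lemma cat_r_eq (r X G : forest) : (r ++ G == X ++ G) = (r == X).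
Proof.
apply/eqP/eqP => [e|-> //]; have hs : size r = size X.
  by move/(congr1 size): e; rewrite !size_cat => /addIn.
by move/eqP: e; rewrite eqseq_cat // eqxx andbT => /eqP.
Qed.

Lemma tlmul_sum K x m n p r A B :
  tlmul x (Esum K m n p r) A B = Esum K m n (fun k => x ++ p k) r A B.
Proof.
rewrite /tlmul /Esum; case: ifP => h.
  apply: eq_bigr => k _; congr (_ && _)%:R.
  by rewrite -[in RHS](cat_take_drop (size x) A) (eqP h) eqseq_cat // eqxx.
symmetry; apply: big1 => k _; case: eqP => // e; move: h; by rewrite e take_size_cat ?eqxx.
Qed.

Lemma trmul_sum K G m n p r A B :
  trmul (Esum K m n p r) G A B = Esum K m n p (fun k => r k ++ G) A B.
Proof.
rewrite /trmul /Esum; case: ifP => h.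
  case/andP: h => h1 /eqP h2.
  apply: eq_bigr => k _; congr (_ && _)%:R.
  by rewrite -[in RHS](cat_take_drop (size B - size G) B) h2 cat_r_eq.
symmetry; apply: big1 => k _; case: (B =P r k ++ G) => [e|]; last by rewrite andbF.
by move: h; rewrite e size_cat leq_addl addnK drop_size_cat ?eqxx.
Qed.

Lemma Node_eq r s : (Node r == Node s) = (r == s).
Proof. by apply/eqP/eqP => [[]|->]. Qed.

Lemma E_nil K A B : Ef K [::] A B = tsimple K [::] [::] A B.
Proof. by rewrite /Ef /Esum big_nat1. Qed.

Lemma sumr_recr (K : fieldType) m n (F : nat -> K) : (m <= n)%N ->
  \sum_(m <= i < n.+1) F i = \sum_(m <= i < n) F i + F n.
Proof. by move=> h; rewrite big_nat_recr. Qed.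
Lemma sumr_ltn (K : fieldType) m n (F : nat -> K) : (m < n)%N ->
  \sum_(m <= i < n) F i = F m + \sum_(m.+1 <= i < n) F i.
Proof. by move=> h; rewrite big_ltn. Qed.
Lemma sumr_cat (K : fieldType) m n p (F : nat -> K) : (m <= n)%N -> (n <= p)%N ->
  \sum_(m <= i < p) F i = \sum_(m <= i < n) F i + \sum_(n <= i < p) F i.
Proof. by move=> h1 h2; rewrite (big_cat_nat h1 h2). Qed.

Lemma fsplit_single x k : fsplit [:: Node x] k =
  if (k < (fsz x).+1)%N then ((fsplit x k).1, [:: Node (fsplit x k).2]) else ([:: Node x], [::]).
Proof. by rewrite fsplit_cons; case: ifP. Qed.

Lemma E_node K x A B : Ef K [:: Node x] A B = tsimple K [:: Node x] [::] A B + tidB (Ef K x) A B.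
Proof.
rewrite /Ef /Esum fsz_cons addn0 sumr_recr // (fsplit_single x (fsz x).+1) ltnn addrC /tsimple.
congr (_ + _).
rewrite /tidB; case: B => [|[S0] [|b B]].
- by rewrite big_nat_cond; apply: big1 => k /andP[/andP[_ hk] _]; rewrite (fsplit_single x k) hk /= ?andbF.
- apply: eq_big_nat => k /andP[_ hk]; rewrite (fsplit_single x k) hk /=.
  by rewrite eqseq_cons Node_eq andbT.
- by rewrite big_nat_cond; apply: big1 => k /andP[/andP[_ hk] _]; rewrite (fsplit_single x k) hk /= eqseq_cons !andbF.
Qed.

Lemma sumr_addn (K : fieldType) a n (F : nat -> K) :
  \sum_(a <= i < (a + n)%N) F i = \sum_(0 <= j < n) F (j + a)%N.
Proof. by rewrite -{1}(add0n a) big_addn addKn. Qed.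

Lemma E_cons K ts G A B : Ef K (Node ts :: G) A B =
  tlmul [:: Node ts] (Ef K G) A B + trmul (Ef K [:: Node ts]) G A B - tsimple K [:: Node ts] G A B.
Proof.
rewrite /Ef tlmul_sum trmul_sum /Esum fsz_cons (fsz_cons ts [::]) addn0.
rewrite [\sum_(0 <= k < (fsz ts).+2) _]sumr_recr // (fsplit_single ts (fsz ts).+1) ltnn.
rewrite /tsimple addrA addrK.
rewrite [in LHS](sumr_cat _ 0 (fsz ts).+1) //; last by apply: leqW; apply: leq_addr.
rewrite -addnS sumr_addn addrC.
congr (_ + _).
- apply: eq_big_nat => k /andP[_ hk]; by rewrite fsplit_cons (fsplit_single ts k) hk.
- apply: eq_big_nat => k _; rewrite fsplit_cons ltnNge leq_addl /= addnK.
  by [].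
Qed.

Lemma tlmul_ext (K : fieldType) x (t1 t2 : tens K) A B : (forall A B, t1 A B = t2 A B) -> tlmul x t1 A B = tlmul x t2 A B.
Proof. by move=> h; rewrite /tlmul h. Qed.
Lemma trmul_ext (K : fieldType) G (t1 t2 : tens K) A B : (forall A B, t1 A B = t2 A B) -> trmul t1 G A B = trmul t2 G A B.
Proof. by move=> h; rewrite /trmul h. Qed.
Lemma tidB_ext (K : fieldType) (t1 t2 : tens K) A B : (forall A B, t1 A B = t2 A B) -> tidB t1 A B = tidB t2 A B.
Proof. by move=> h; rewrite /tidB; case: B => [|[S0] [|b B]] //; rewrite h. Qed.

Lemma D_E (K : fieldType) (D : forest -> forest -> forest -> K) : is_Delta D -> forall F A B, D F A B = Ef K F A B.
Proof.
case=> D0 Dcat Dnode F; have [n] := ubnP (fsz F); elim: n F => // n IH [|[ts] G] hlt A B.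
  by rewrite D0 E_nil.
rewrite fsz_cons in hlt.
case: G hlt => [|g G] hlt.
  have := Dnode ts A B; rewrite /Bplus => ->.
  rewrite E_node; congr (_ + _); apply: tidB_ext => A' B'; apply: IH; lia.
have := Dcat [:: Node ts] (g :: G) A B; rewrite cat1s => ->.
have gpos : (0 < fsz (g :: G))%N by case: (g) => gs; rewrite fsz_cons.
rewrite E_cons; congr (_ + _ - _).
- apply: tlmul_ext => A' B'; apply: IH; lia.
- apply: trmul_ext => A' B'; apply: IH; rewrite fsz_cons addn0; lia.
Qed.

Lemma nvE F : nv F = fsz F.
Proof. exact: size_fverts. Qed.

Theorem proposition10 (K : fieldType) (D : forest -> forest -> forest -> K) :
  is_Delta D ->
  forall F : forest, F != [::] ->
  forall A B : forest,
    D F A B =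
      \sum_(c : {set 'I_(nv F)} | left_admissible c)
          ((Pcut c == A) && (Rcut c == B))%:R
      + tsimple K F [::] A B + tsimple K [::] F A B.
Proof.
move=> HD F F0 A B; rewrite (D_E _ _ HD) /Ef /Esum -nvE.
set n := nv F.
set f := fun k => ((A == (fsplit F k).1) && (B == (fsplit F k).2))%:R : K.
have n0 : (0 < n)%N by rewrite /n nvE; case: (F) F0 => // -[ts] G _; rewrite fsz_cons.
rewrite sumr_recr // sumr_ltn //.
have -> : ((A == (fsplit F n).1) && (B == (fsplit F n).2))%:R = tsimple K F [::] A B.
  by rewrite /n nvE fsplit_all.
have -> : ((A == (fsplit F 0).1) && (B == (fsplit F 0).2))%:R = tsimple K [::] F A B.
  by rewrite fsplit_0.
rewrite [tsimple K [::] F A B + _]addrC -addrA [tsimple K [::] F A B + _]addrC addrA.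
congr (_ + _ + _).
pose Ks := [set k : 'I_n.+1 | (0 < k < n)%N].
pose h := fun k : 'I_n.+1 => ck F k.
have LAE : forall c, left_admissible c = (c \in [set h k | k in Ks]).
  move=> c; apply/idP/imsetP.
  - move=> /LA_inv [k hk ->].
    have kn : (k < n.+1)%N by case/andP: hk => _ /ltnW.
    by exists (Ordinal kn); rewrite // inE.
  - by move=> [k]; rewrite inE => hk ->; apply: LA_ck.
rewrite (eq_bigl _ _ LAE) big_imset /=; last first.
  move=> k1 k2; rewrite !inE => /andP[_ h1] /andP[_ h2] e.
  apply: val_inj => /=.
  have e' : ck F k1 = ck F k2 := e.
  by rewrite -(count_ck F k1 (ltnW h1)) -(count_ck F k2 (ltnW h2)) e'.
rewrite (eq_bigr (fun k : 'I_n.+1 => f k)); last first.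
  move=> k; rewrite inE => /andP[_ hk]; have [e1 e2] := ck_split F k (ltnW hk).
  by rewrite /h e1 e2 /f ![_ == A]eq_sym ![_ == B]eq_sym.
rewrite (eq_bigl (fun k : 'I_n.+1 => (0 < k < n)%N)); last by move=> k; rewrite inE.
rewrite -(big_mkord (fun k => (0 < k < n)%N) f) [in RHS]big_mkcond [in RHS]sumr_recr // [in RHS]sumr_ltn //.
rewrite ltnn /= ltnn andbF add0r addr0.
apply: eq_big_nat => k /andP[hk1 hk2]; by rewrite hk1 hk2.
Qed.
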